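(* Let $P_{XY}$ be a probability distribution on finite $\mathcal X\times\mathcal Y$ with marginals $P_X,P_Y$. Then: (1) $U(X;Y)\ge0$, with equality if and only if $P_{XY}=P_X\times P_Y$. (2) $U(X;Y)<\infty$ if and only if there exists $y\in\mathcal Y$ such that for every $x\in\mathcal X$, either $P_{Y|X}(y|x)>0$ or $P_X(x)=0$. (3) If $X-Y-Z$ is a Markov chain (with $Z$ taking values in a finite set), then $U(X;Z)\le U(X;Y)$ and $U(X;Z)\le U(Y;Z)$.
   Context: $D(P\|Q)=\sum P\log(P/Q)$ ($0\log(0/q)=0$; $+\infty$ if $P\not\ll Q$). For a joint distribution $P_{AB}$ with $A$-marginal $P_A$, the umlaut information is $U(A;B)=\min_{Q_B}D(P_A\times Q_B\|P_{AB})$ (note the asymmetry: the first argument's marginal is kept). *)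

(* Defs.v *)
From HB Require Import structures.
From mathcomp Require Import all_boot all_order all_algebra.
From mathcomp Require Import all_classical all_reals.
From mathcomp Require Import ereal exp.
Set Implicit Arguments. Unset Strict Implicit. Unset Printing Implicit Defensive.
Import Order.TTheory GRing.Theory Num.Theory.
Local Open Scope ring_scope.
Local Open Scope classical_set_scope.

Section Defs.
Variable R : realType.

Definition is_dist (T : finType) (p : {ffun T -> R}) : Prop :=
  (forall t, 0 <= p t) /\ \sum_(t : T) p t = 1.

Definition KL (T : finType) (p q : {ffun T -> R}) : \bar R :=
  if [exists t, (0 < p t) && (q t == 0)] then +oo%E
  else (\sum_(t | 0 < p t) p t * ln (p t / q t))%:E.

Definition margL (A B : finType) (p : {ffun A * B -> R}) : {ffun A -> R} :=
  [ffun a => \sum_(b : B) p (a, b)].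
Definition margR (A B : finType) (p : {ffun A * B -> R}) : {ffun B -> R} :=
  [ffun b => \sum_(a : A) p (a, b)].

Definition prodd (A B : finType) (pa : {ffun A -> R}) (qb : {ffun B -> R})
  : {ffun A * B -> R} := [ffun ab => pa ab.1 * qb ab.2].

Definition umlaut (A B : finType) (p : {ffun A * B -> R}) : \bar R :=
  ereal_inf [set KL (prodd (margL p) q) p | q in [set q : {ffun B -> R} | is_dist q]].

Definition margXY (X Y Z : finType) (p : {ffun X * Y * Z -> R}) : {ffun X * Y -> R} :=
  [ffun xy => \sum_(z : Z) p (xy.1, xy.2, z)].
Definition margYZ (X Y Z : finType) (p : {ffun X * Y * Z -> R}) : {ffun Y * Z -> R} :=
  [ffun yz => \sum_(x : X) p (x, yz.1, yz.2)].
Definition margXZ (X Y Z : finType) (p : {ffun X * Y * Z -> R}) : {ffun X * Z -> R} :=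
  [ffun xz => \sum_(y : Y) p (xz.1, y, xz.2)].
Definition margY3 (X Y Z : finType) (p : {ffun X * Y * Z -> R}) : {ffun Y -> R} :=
  [ffun y => \sum_(x : X) \sum_(z : Z) p (x, y, z)].

(* X - Y - Z Markov chain: P(x,y,z) P(y) = P(x,y) P(y,z), i.e. X, Z
   conditionally independent given Y *)
Definition markov3 (X Y Z : finType) (p : {ffun X * Y * Z -> R}) : Prop :=
  forall x y z, p (x, y, z) * margY3 p y = margXY p (x, y) * margYZ p (y, z).

End Defs.

(* Main.v *)
Require Import Defs.
From HB Require Import structures.
From mathcomp Require Import all_boot all_order all_algebra.
From mathcomp Require Import all_classical all_reals.
From mathcomp Require Import ereal exp.
From mathcomp Require Import sequences ring lra.
Import Order.TTheory GRing.Theory Num.Theory.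
Local Open Scope ring_scope.
Set Implicit Arguments. Unset Strict Implicit. Unset Printing Implicit Defensive.

Section S.
Variable R : realType.

Lemma lnle (t : R) : 0 < t -> ln t <= t - 1.
Proof.
move=> t0; rewrite [X in ln X](_ : t = 1 + (t - 1)); last by ring.
by apply: le_ln1Dx; lra.
Qed.

Lemma lnge (t : R) : 0 < t -> 1 - t^-1 <= ln t.
Proof.
move=> t0; have := @lnle t^-1; rewrite invr_gt0 => /(_ t0).
rewrite lnV ?posrE //; lra.
Qed.

Lemma lneq (t : R) : 0 < t -> ln t = t - 1 -> t = 1.
Proof.
move=> t0 h; set s := Num.sqrt t.
have s0 : 0 < s by rewrite sqrtr_gt0.
have ts : t = s ^+ 2 by rewrite sqr_sqrtr // ltW.
have := lnle s0; rewrite ts lnXn // in h => hs.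
have e : (s - 1) ^+ 2 <= 0 by nra.
have : s - 1 = 0 by apply/eqP; rewrite -sqrf_eq0; apply/eqP/le_anti; rewrite e sqr_ge0.
by move=> /eqP; rewrite subr_eq0 => /eqP s1; rewrite ts s1 expr1n.
Qed.

Lemma sum_delta (T : finType) (a : T) (F : T -> R) :
  \sum_i (i == a)%:R * F i = F a.
Proof.
rewrite (bigD1 a) //= eqxx mul1r big1 ?addr0 // => i /negbTE ->; by rewrite mul0r.
Qed.

Lemma KL_sum (T : finType) (p q : {ffun T -> R}) :
  (forall t, 0 <= p t) -> (forall t, 0 < p t -> q t != 0) ->
  KL p q = (\sum_t p t * ln (p t / q t))%:E.
Proof.
move=> p0 pq; rewrite /KL ifF; last first.
  by apply/negbTE/existsP => -[t /andP [pt qt]]; move: (pq t pt); rewrite qt.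
congr (_%:E); rewrite big_mkcond; apply eq_bigr => t _; case: ifP => // /negbT.
rewrite -leNgt => pt0; have -> : p t = 0 by apply/le_anti; rewrite pt0 p0.
by rewrite mul0r.
Qed.

Lemma KL_inf (T : finType) (p q : {ffun T -> R}) t :
  0 < p t -> q t = 0 -> KL p q = +oo%E.
Proof. by move=> pt qt; rewrite /KL ifT //; apply/existsP; exists t; rewrite pt qt eqxx. Qed.

Lemma KL_fin (T : finType) (p q : {ffun T -> R}) t :
  KL p q != +oo%E -> 0 < p t -> q t != 0.
Proof. by move=> h pt; apply/negP => /eqP qt; move: h; rewrite (KL_inf pt qt). Qed.


Lemma sum_pair (A B : finType) (F : A * B -> R) :
  \sum_t F t = \sum_a \sum_b F (a, b).
Proof. by rewrite (pair_bigA _ (fun a b => F (a, b))); apply: eq_bigr => -[]. Qed.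

Lemma le_sum_term (T : finType) (F : T -> R) j :
  (forall i, 0 <= F i) -> F j <= \sum_i F i.
Proof. by move=> F0; rewrite (bigD1 j) //= lerDl sumr_ge0. Qed.

Lemma prod_gt0 (a b : R) : 0 <= a -> 0 <= b -> 0 < a * b -> 0 < a /\ 0 < b.
Proof.
move=> a0 b0 ab; split; rewrite lt_def; apply/andP; split => //;
  apply/eqP => e; by move: ab; rewrite e ?mul0r ?mulr0 ltxx.
Qed.

Lemma ge0_neq0 (a : R) : 0 <= a -> a != 0 -> 0 < a.
Proof. by move=> a0 an; rewrite lt_def an a0. Qed.

Lemma dist_pos (T : finType) (q : {ffun T -> R}) : is_dist q -> exists t, 0 < q t.
Proof.
move=> [q0 q1]; apply/existsP; apply: contraT; rewrite negb_exists => /forallP h.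
have : \sum_t q t = 0 by apply: big1 => t _; apply/le_anti; rewrite q0 andbT leNgt h.
by rewrite q1 => /eqP; rewrite oner_eq0.
Qed.

Section Part12.
Variables (X Y : finType) (p : {ffun X * Y -> R}).
Hypothesis hp : is_dist p.

Let P := margL p.
Let m := margR p.

Lemma p0 t : 0 <= p t. Proof. by case: hp. Qed.
Lemma P0 x : 0 <= P x. Proof. by rewrite /P ffunE sumr_ge0 // => y _; exact: p0. Qed.
Lemma m0 y : 0 <= m y. Proof. by rewrite /m ffunE sumr_ge0 // => y' _; exact: p0. Qed.
Lemma sumP : \sum_x P x = 1.
Proof.
case: hp => _ <-; rewrite (eq_bigr (fun t => p (t.1, t.2))); last by case.
rewrite -(pair_bigA _ (fun x y => p (x, y))); apply: eq_bigr => x _; by rewrite ffunE.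
Qed.
Lemma summ : \sum_y m y = 1.
Proof.
case: hp => _ <-; rewrite (eq_bigr (fun t => p (t.1, t.2))); last by case.
rewrite -(pair_bigA _ (fun x y => p (x, y))) exchange_big; apply: eq_bigr => y _; by rewrite ffunE.
Qed.
Lemma pP x y : P x = 0 -> p (x, y) = 0.
Proof.
rewrite /P ffunE => h.
by apply: (@psumr_eq0P _ _ xpredT (fun y => p (x, y))) => // y' _; exact: p0.
Qed.
Lemma pm x y : p (x, y) <= m y.
Proof. rewrite /m ffunE; apply: (le_sum_term (F := fun x => p (x, y))) => x'; exact: p0. Qed.

Definition Gd y := [forall x, (0 < P x) ==> (0 < p (x, y))].
Definition ad y := \sum_x P x * ln (p (x, y) / P x).
Definition Zd := \sum_y (Gd y)%:R * expR (ad y).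

Lemma KLQ_inf (Q : {ffun Y -> R}) y : is_dist Q -> 0 < Q y -> ~~ Gd y ->
  KL (prodd P Q) p = +oo%E.
Proof.
move=> hQ Qy; rewrite negb_forall => /existsP [x]; rewrite negb_imply => /andP [Px].
rewrite -leNgt => px; apply: (KL_inf (t := (x, y))).
  by rewrite ffunE mulr_gt0.
by apply/le_anti; rewrite px p0.
Qed.

Lemma KLQ_val (Q : {ffun Y -> R}) : is_dist Q -> (forall y, 0 < Q y -> Gd y) ->
  KL (prodd P Q) p = (\sum_y Q y * (ln (Q y) - ad y))%:E.
Proof.
move=> [Q0 Q1] hG; rewrite KL_sum; last first.
- move=> [x y]; rewrite ffunE /= => /(prod_gt0 (P0 x) (Q0 y)) [Px Qy].
  by move: (hG y Qy) => /forallP/(_ x)/implyP/(_ Px); rewrite lt0r => /andP [].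
- by move=> t; rewrite ffunE mulr_ge0 // P0.
congr (_%:E); rewrite sum_pair exchange_big /=.
apply: eq_bigr => y _.
have [Qy0|Qy] := eqVneq (Q y) 0.
  by rewrite Qy0 mul0r big1 // => x _; rewrite !ffunE Qy0 mulr0 mul0r.
have Qyp : 0 < Q y by rewrite ge0_neq0.
have Gy := hG y Qyp.
rewrite /ad -[ln (Q y)]mul1r -sumP mulr_suml -sumrB mulr_sumr.
apply: eq_bigr => x _; rewrite [prodd _ _ _]ffunE /=.
have [Px0|Px] := eqVneq (P x) 0.
  by rewrite Px0 !mul0r subr0 mulr0.
have Pxp : 0 < P x by rewrite ge0_neq0 ?P0.
have pxy : 0 < p (x, y) by move/forallP: Gy => /(_ x)/implyP/(_ Pxp).
rewrite (_ : P x * Q y / p (x, y) = Q y / (p (x, y) / P x)); last first.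
  by field; rewrite Px /= gt_eqF.
rewrite ln_div ?posrE ?divr_gt0 //; ring.
Qed.

Lemma Zd_ge0 : 0 <= Zd.
Proof. by rewrite sumr_ge0 // => y _; rewrite mulr_ge0 // ?ler0n // expR_ge0. Qed.

Lemma lower (Q : {ffun Y -> R}) : is_dist Q -> 0 < Zd ->
  ((- ln Zd)%:E <= KL (prodd P Q) p)%E.
Proof.
move=> hQ Z0.
case: (boolP [exists y, (0 < Q y) && ~~ Gd y]).
  by move=> /existsP [y /andP [Qy Gy]]; rewrite (KLQ_inf hQ Qy Gy) leey.
rewrite negb_exists => /forallP hG.
have hG' y : 0 < Q y -> Gd y.
  by move=> Qy; move: (hG y); rewrite Qy /= negbK.
rewrite (KLQ_val hQ hG') lee_fin.
case: hQ => Q0 Q1.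
have pt y : Q y * (1 - ln Zd) - (Gd y)%:R * expR (ad y) / Zd <= Q y * (ln (Q y) - ad y).
  have [Qy0|Qy] := eqVneq (Q y) 0.
    rewrite Qy0 !mul0r sub0r oppr_le0 divr_ge0 ?(ltW Z0) //.
  have Qyp : 0 < Q y by rewrite ge0_neq0.
  rewrite (hG' y Qyp) mul1r.
  set u := Q y * Zd / expR (ad y).
  have u0 : 0 < u by rewrite divr_gt0 ?mulr_gt0 ?expR_gt0.
  have lu : ln u = ln (Q y) + ln Zd - ad y.
    by rewrite /u ln_div ?posrE ?mulr_gt0 ?expR_gt0 // lnM ?posrE // expRK.
  have := lnge u0; rewrite lu => h.
  have e : Q y * u^-1 = expR (ad y) / Zd.
    by rewrite /u; field; rewrite ?gt_eqF ?expR_gt0.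
  have h2 := ler_wpM2l (ltW Qyp) h.
  rewrite mulrBr mulr1 e in h2.
  rewrite mulrBr mulr1; lra.
apply: le_trans (ler_sum _ (fun y _ => pt y)).
rewrite sumrB -mulr_suml Q1 mul1r -mulr_suml -/Zd divff ?gt_eqF //; lra.
Qed.

Lemma existsP0 : exists x, 0 < P x.
Proof. by apply: (dist_pos (q := P)); split; [exact: P0|exact: sumP]. Qed.

Lemma jensen_pt y x : Gd y ->
  0 <= p (x, y) / m y - P x - (P x * ln (p (x, y) / P x) - P x * ln (m y)) /\
  (p (x, y) / m y - P x - (P x * ln (p (x, y) / P x) - P x * ln (m y)) = 0 ->
     p (x, y) = P x * m y).
Proof.
move=> Gy.
have [x0 Px0] := existsP0.
have my : 0 < m y.
  apply: lt_le_trans (pm x0 y).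
  by move/forallP: Gy => /(_ x0)/implyP/(_ Px0).
have [Px0'|Px] := eqVneq (P x) 0.
  by rewrite Px0' pP // !mul0r !subrr; split => //; rewrite mul0r.
have Pxp : 0 < P x by rewrite ge0_neq0 ?P0.
have pxy : 0 < p (x, y) by move/forallP: Gy => /(_ x)/implyP/(_ Pxp).
set t := p (x, y) / (P x * m y).
have t0 : 0 < t by rewrite divr_gt0 ?mulr_gt0.
have e1 : P x * ln (p (x, y) / P x) - P x * ln (m y) = P x * ln t.
  rewrite -mulrBr -ln_div ?posrE ?divr_gt0 //; congr (_ * ln _).
  by rewrite /t; field; rewrite ?gt_eqF.
have e2 : p (x, y) / m y - P x = P x * (t - 1).
  by rewrite /t; field; rewrite ?gt_eqF.
rewrite e1 e2 -mulrBr; split.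
  by rewrite mulr_ge0 ?P0 // subr_ge0 lnle.
move=> /eqP; rewrite mulf_eq0 gt_eqF //= subr_eq0 => /eqP h.
have : t = 1 by apply: lneq => //.
move=> t1; have e : t * (P x * m y) = p (x, y) by rewrite /t; field; rewrite ?gt_eqF.
by rewrite -e t1 mul1r.
Qed.

Lemma m_pos y : Gd y -> 0 < m y.
Proof.
move=> Gy; have [x0 Px0] := existsP0; apply: lt_le_trans (pm x0 y).
by move/forallP: Gy => /(_ x0)/implyP/(_ Px0).
Qed.

Definition dd y x := p (x, y) / m y - P x - (P x * ln (p (x, y) / P x) - P x * ln (m y)).

Lemma sum_dd y : Gd y -> \sum_x dd y x = ln (m y) - ad y.
Proof.
move=> Gy; have my := m_pos Gy.
rewrite /dd sumrB sumrB sumrB -mulr_suml sumP -mulr_suml sumP mul1r -/(ad y).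
have -> : \sum_x p (x, y) = m y by rewrite /m ffunE.
rewrite divff ?gt_eqF //; ring.
Qed.

Lemma exp_ad_le y : Gd y -> expR (ad y) <= m y.
Proof.
move=> Gy; have my := m_pos Gy.
have : 0 <= ln (m y) - ad y.
  by rewrite -sum_dd // sumr_ge0 // => x _; case: (jensen_pt x Gy).
move=> h; rewrite -[m y]lnK ?posrE // ler_expR -subr_ge0.
exact: h.
Qed.

Lemma Z_le1 : Zd <= 1.
Proof.
rewrite -summ; apply: ler_sum => y _; case: (boolP (Gd y)) => Gy.
  by rewrite mul1r exp_ad_le.
by rewrite mul0r m0.
Qed.

Lemma Z_pos y : Gd y -> 0 < Zd.
Proof.
move=> Gy; apply: lt_le_trans (le_sum_term (F := fun y => (Gd y)%:R * expR (ad y)) y _).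
  by rewrite Gy mul1r expR_gt0.
by move=> i; rewrite mulr_ge0 ?ler0n ?expR_ge0.
Qed.

Lemma Z_eq1 : Zd = 1 -> p = prodd P m.
Proof.
move=> Z1.
have hs : \sum_y (m y - (Gd y)%:R * expR (ad y)) = 0.
  by rewrite sumrB summ -/Zd Z1 subrr.
have h y : m y - (Gd y)%:R * expR (ad y) = 0.
  apply: (@psumr_eq0P _ _ xpredT (fun y => m y - (Gd y)%:R * expR (ad y))) => // i _.
  rewrite subr_ge0; case: (boolP (Gd i)) => Gi.
    by rewrite mul1r exp_ad_le.
  by rewrite mul0r m0.
apply/ffunP => -[x y]; rewrite ffunE /=.
have := h y; case: (boolP (Gd y)) => Gy; last first.
  rewrite mul0r subr0 => my0; rewrite my0 mulr0; apply/le_anti; rewrite p0 andbT -my0 pm //.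
rewrite mul1r => /eqP; rewrite subr_eq0 => /eqP e.
have ea : ad y = ln (m y) by rewrite e expRK.
have hd : \sum_x dd y x = 0 by rewrite sum_dd // ea subrr.
have hdx : dd y x = 0.
  apply: (@psumr_eq0P _ _ xpredT (dd y)) => // i _.
  by case: (jensen_pt i Gy).
by case: (jensen_pt x Gy) => _ /(_ hdx).
Qed.

Lemma fin_G (q : {ffun Y -> R}) : is_dist q -> KL (prodd P q) p != +oo%E ->
  forall y, 0 < q y -> Gd y.
Proof.
move=> hq hf y qy; apply: contraT => nG; move: hf; by rewrite (KLQ_inf hq qy nG).
Qed.

Lemma fin_exists : (umlaut p < +oo)%E -> exists y, Gd y.
Proof.
move/ereal_inf_lt => [e [q hq <-] lt]; have [y qy] := dist_pos hq.
by exists y; apply: (fin_G hq _ qy); rewrite lt_eqF.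
Qed.

Lemma lower_U : 0 < Zd -> ((- ln Zd)%:E <= umlaut p)%E.
Proof. by move=> Z0; apply: le_ereal_inf_tmp => e [q hq <-]; exact: lower. Qed.

Lemma KLpp : KL p p = 0%E.
Proof.
rewrite (KL_sum (p := p) (q := p) p0); last by move=> t pt; rewrite gt_eqF.
congr (_%:E); apply: big1 => t _.
have [->|pt] := eqVneq (p t) 0; first by rewrite mul0r.
by rewrite divff // ln1 mulr0.
Qed.

Lemma part12 : ((0 <= umlaut p)%E /\ (umlaut p = 0%E <-> p = prodd (margL p) (margR p))) /\ ((umlaut p < +oo)%E <-> exists y, forall x, 0 < p (x, y) / margL p x \/ margL p x = 0).
Proof.
have U0 : (0 <= umlaut p)%E.
  apply: le_ereal_inf_tmp => e [q hq <-]; have [y qy] := dist_pos hq.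
  case: (boolP (Gd y)) => Gy; last by rewrite (KLQ_inf hq qy Gy) leey.
  apply: le_trans (lower hq (Z_pos Gy)); rewrite lee_fin oppr_ge0 ln_le0 //.
  exact: Z_le1.
split; [split => //; split|split].
- move=> H; have : (umlaut p < +oo)%E by rewrite H ltey.
  move=> /fin_exists [y Gy]; have Zp := Z_pos Gy.
  have := lower_U Zp; rewrite H lee_fin oppr_le0 => lnZ.
  apply: Z_eq1; apply/le_anti; rewrite Z_le1 /=; rewrite leNgt; apply/negP => Z1.
  by have := ln_lt0 (x := Zd); rewrite Zp Z1 /= => /(_ isT); rewrite ltNge lnZ.
- move=> H; apply/le_anti; rewrite U0 andbT; apply: ge_ereal_inf.
  exists (KL (prodd (margL p) (margR p)) p); last by rewrite -H KLpp.
  by exists (margR p) => //; split; [exact: m0|exact: summ].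
- move=> /fin_exists [y Gy]; exists y => x.
  have [Px0|Px] := eqVneq (P x) 0; first by right.
  have Pxp : 0 < P x by rewrite ge0_neq0 ?P0.
  left; rewrite divr_gt0 //; by move/forallP: Gy => /(_ x)/implyP/(_ Pxp).
- move=> [y h].
  have Gy : Gd y.
    apply/forallP => x; apply/implyP => Px; case: (h x) => [hd|h0].
      by have := mulr_gt0 hd Px; rewrite divfK ?gt_eqF.
    by move: Px; rewrite /P h0 ltxx.
  pose q := [ffun y' : Y => (y' == y)%:R : R].
  have hq : is_dist q.
    split; first by move=> t; rewrite ffunE ler0n.
    rewrite (bigD1 y) //= ffunE eqxx big1 ?addr0 // => i /negbTE hi; by rewrite ffunE hi.
  have hG y' : 0 < q y' -> Gd y'.
    rewrite ffunE; have [->//|] := eqVneq y' y; by rewrite ltxx.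
  apply: (@le_lt_trans _ _ (KL (prodd P q) p)); last by rewrite (KLQ_val hq hG) ltey.
  apply: ge_ereal_inf; exists (KL (prodd P q) p) => //; by exists q.
Qed.

End Part12.

Lemma DPI (S T : finType) (P Q : {ffun S -> R}) (P' Q' : {ffun T -> R}) (K : S -> T -> R) :
  (forall s, 0 <= P s) -> (forall s, 0 <= Q s) -> (forall s t, 0 <= K s t) ->
  (forall s, 0 < P s -> 0 < Q s -> \sum_t K s t = 1) ->
  (forall t, P' t = \sum_s P s * K s t) -> (forall t, Q' t = \sum_s Q s * K s t) ->
  (KL P' Q' <= KL P Q)%E.
Proof.
move=> P0 Q0 K0 K1 hP' hQ'.
case: (boolP [exists s, (0 < P s) && (Q s == 0)]) => [ex|nex].
  by rewrite /KL ex leey.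
have PQ s : 0 < P s -> 0 < Q s.
  move=> Ps; apply: ge0_neq0 => //; apply: contraNN nex => /eqP Qs.
  by apply/existsP; exists s; rewrite Ps Qs eqxx.
have P'0 t : 0 <= P' t by rewrite hP' sumr_ge0 // => s _; rewrite mulr_ge0.
have Q'0 t : 0 <= Q' t by rewrite hQ' sumr_ge0 // => s _; rewrite mulr_ge0.
have Q'P' t : Q' t = 0 -> P' t = 0.
  rewrite hQ' hP' => h; apply: big1 => s _.
  have := @psumr_eq0P _ _ xpredT (fun s => Q s * K s t) (fun s _ => mulr_ge0 (Q0 s) (K0 s t)) h s isT.
  have [->|Ps] := eqVneq (P s) 0; first by rewrite mul0r.
  have Psp : 0 < P s by rewrite ge0_neq0.
  by move/eqP; rewrite mulf_eq0 gt_eqF ?PQ //= => /eqP ->; rewrite mulr0.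
rewrite (KL_sum P'0); last by move=> t Pt; apply/eqP => /Q'P' e; move: Pt; rewrite e ltxx.
rewrite (KL_sum P0); last by move=> s /PQ /gt_eqF ->.
rewrite lee_fin.
have eR : \sum_s P s * ln (P s / Q s) = \sum_t \sum_s P s * K s t * ln (P s / Q s).
  rewrite exchange_big; apply: eq_bigr => s _.
  have [->|Ps] := eqVneq (P s) 0; first by rewrite mul0r big1 // => t _; rewrite !mul0r.
  have Psp : 0 < P s by rewrite ge0_neq0.
  rewrite -mulr_suml -mulr_sumr K1 ?mulr1 ?PQ //.
rewrite eR; apply: ler_sum => t _.
have pt s : P s * K s t * ln (P' t / Q' t) + P s * K s t - P' t * (Q s * K s t / Q' t)
    <= P s * K s t * ln (P s / Q s).
  have [PK0|PK] := eqVneq (P s * K s t) 0.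
    rewrite PK0 !mul0r add0r sub0r oppr_le0 mulr_ge0 // divr_ge0 // mulr_ge0 //.
  have PKp : 0 < P s * K s t by rewrite ge0_neq0 // mulr_ge0.
  have [Ps Ks] := prod_gt0 (P0 s) (K0 s t) PKp.
  have Qs := PQ s Ps.
  have Q't : 0 < Q' t.
    apply: lt_le_trans (_ : Q s * K s t <= _); first by rewrite mulr_gt0.
    rewrite hQ'; apply: (le_sum_term (F := fun s => Q s * K s t)) => i; exact: mulr_ge0.
  have P't : 0 < P' t.
    apply: (lt_le_trans PKp).
    rewrite hP'; apply: (le_sum_term (F := fun s => P s * K s t)) => i; exact: mulr_ge0.
  set u := (P s / Q s) / (P' t / Q' t).
  have u0 : 0 < u by rewrite /u; apply: divr_gt0; apply: divr_gt0.
  have lu : ln u = ln (P s / Q s) - ln (P' t / Q' t).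
    by rewrite /u ln_div // posrE; apply: divr_gt0.
  have := lnge u0; rewrite lu => h.
  have h2 := ler_wpM2l (ltW PKp) h.
  have e : P s * K s t * u^-1 = P' t * (Q s * K s t / Q' t).
    by rewrite /u; field; rewrite ?gt_eqF.
  rewrite mulrBr mulr1 e mulrBr in h2; lra.
apply: le_trans (ler_sum _ (fun s _ => pt s)).
rewrite sumrB big_split /= -mulr_suml -hP' -mulr_sumr -mulr_suml -hQ'.
have [Q't0|Q't] := eqVneq (Q' t) 0.
  by rewrite (Q'P' _ Q't0) Q't0 !mul0r addr0 subr0.
by rewrite divff // mulr1 addrK.
Qed.

Section Part3.
Variables (X Y Z : finType) (p : {ffun X * Y * Z -> R}).
Hypothesis hp : is_dist p.
Hypothesis hm : markov3 p.

Let m := margY3 p.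
Let pXY := margXY p.
Let pYZ := margYZ p.
Let pXZ := margXZ p.

Lemma q0 t : 0 <= p t. Proof. by case: hp. Qed.
Lemma pXYE x y : pXY (x, y) = \sum_z p (x, y, z). Proof. by rewrite ffunE. Qed.
Lemma pYZE y z : pYZ (y, z) = \sum_x p (x, y, z). Proof. by rewrite ffunE. Qed.
Lemma pXZE x z : pXZ (x, z) = \sum_y p (x, y, z). Proof. by rewrite ffunE. Qed.
Lemma mE y : m y = \sum_x \sum_z p (x, y, z). Proof. by rewrite ffunE. Qed.
Lemma mXY y : m y = \sum_x pXY (x, y).
Proof. by rewrite mE; apply: eq_bigr => x _; rewrite pXYE. Qed.
Lemma mYZ y : m y = \sum_z pYZ (y, z).
Proof. by rewrite mE exchange_big; apply: eq_bigr => z _; rewrite pYZE. Qed.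
Lemma pXY0 t : 0 <= pXY t.
Proof. by case: t => x y; rewrite pXYE sumr_ge0 // => *; exact: q0. Qed.
Lemma pYZ0 t : 0 <= pYZ t.
Proof. by case: t => y z; rewrite pYZE sumr_ge0 // => *; exact: q0. Qed.
Lemma pXZ0 t : 0 <= pXZ t.
Proof. by case: t => x z; rewrite pXZE sumr_ge0 // => *; exact: q0. Qed.
Lemma mm0 y : 0 <= m y. Proof. by rewrite mXY sumr_ge0 // => *; exact: pXY0. Qed.
Lemma pXYm x y : pXY (x, y) <= m y.
Proof. by rewrite mXY; apply: (le_sum_term (F := fun x => pXY (x, y))) => i; exact: pXY0. Qed.
Lemma pYZm y z : pYZ (y, z) <= m y.
Proof. by rewrite mYZ; apply: (le_sum_term (F := fun z => pYZ (y, z))) => i; exact: pYZ0. Qed.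
Lemma pm0 x y z : m y = 0 -> p (x, y, z) = 0.
Proof.
move=> my; have : pXY (x, y) = 0 by apply/le_anti; rewrite pXY0 -my pXYm.
rewrite pXYE => h.
by apply: (@psumr_eq0P _ _ xpredT (fun z => p (x, y, z))) => // i _; exact: q0.
Qed.
Lemma pXYm0 x y : m y = 0 -> pXY (x, y) = 0.
Proof. by move=> my; apply/le_anti; rewrite pXY0 -my pXYm. Qed.

Lemma markov_sum x z : pXZ (x, z) = \sum_y pXY (x, y) * (pYZ (y, z) / m y).
Proof.
rewrite pXZE; apply: eq_bigr => y _.
have [my|my] := eqVneq (m y) 0; first by rewrite pm0 // my invr0 !mulr0.
have := hm x y z; rewrite -/m -/pXY -/pYZ => e.
by rewrite mulrA -e mulfK.
Qed.

Lemma margL_XZ_XY : margL pXZ = margL pXY.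
Proof.
apply/ffunP => x; rewrite !ffunE.
under eq_bigr do rewrite pXZE.
rewrite exchange_big; apply: eq_bigr => y _; by rewrite pXYE.
Qed.

Lemma margL_YZ y : margL pYZ y = m y.
Proof. by rewrite ffunE mYZ. Qed.

Lemma margL_XZ x : margL pXZ x = \sum_y pXY (x, y).
Proof. by rewrite margL_XZ_XY ffunE. Qed.

Lemma sum_all : \sum_x \sum_y \sum_z p (x, y, z) = 1.
Proof.
by case: hp => _ <-; rewrite [RHS]sum_pair [RHS]sum_pair.
Qed.

Lemma sumPX : \sum_x margL pXY x = 1.
Proof.
rewrite -sum_all; apply: eq_bigr => x _; rewrite ffunE; apply: eq_bigr => y _.
by rewrite pXYE.
Qed.

Lemma PX0 x : 0 <= margL pXY x.
Proof. by rewrite ffunE sumr_ge0 // => *; exact: pXY0. Qed.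

Lemma part3a : (umlaut pXZ <= umlaut pXY)%E.
Proof.
apply: le_ereal_inf_tmp => e [Q hQ <-].
case: (eqVneq (KL (prodd (margL pXY) Q) pXY) +oo%E) => [->|hf]; first exact: leey.
have Qm y : 0 < Q y -> 0 < m y.
  move=> Qy; have [x Px] : exists x, 0 < margL pXY x.
    by apply: dist_pos; split; [exact: PX0|exact: sumPX].
  have := KL_fin (t := (x, y)) hf; rewrite ffunE mulr_gt0 // => /(_ isT) h.
  apply: lt_le_trans (pXYm x y); exact: ge0_neq0 (pXY0 _) h.
case: hQ => Q0 Q1.
pose QZ := [ffun z => \sum_y Q y * (pYZ (y, z) / m y)].
have hQZ : is_dist QZ.
  split.
    move=> z; rewrite ffunE sumr_ge0 // => y _.
    by rewrite mulr_ge0 ?divr_ge0 ?pYZ0 ?mm0.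
  rewrite -Q1; under eq_bigr do rewrite ffunE.
  rewrite exchange_big; apply: eq_bigr => y _.
  have [->|Qy] := eqVneq (Q y) 0; first by rewrite big1 // => *; rewrite mul0r.
  have my := Qm y (ge0_neq0 (Q0 y) Qy).
  by rewrite -mulr_sumr -mulr_suml -mYZ divff ?gt_eqF // mulr1.
apply: ge_ereal_inf; exists (KL (prodd (margL pXZ) QZ) pXZ); first by exists QZ.
rewrite margL_XZ_XY.
apply: (DPI (K := fun s t => (s.1 == t.1)%:R * (pYZ (s.2, t.2) / m s.2))).
- by move=> s; rewrite ffunE mulr_ge0 ?PX0.
- exact: pXY0.
- by move=> s t; rewrite mulr_ge0 ?ler0n ?divr_ge0 ?pYZ0 ?mm0.
- move=> [x' y] _ /= Ps.
  have my : 0 < m y by apply: lt_le_trans Ps (pXYm _ _).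
  rewrite sum_pair (bigD1 x') //= [X in _ + X]big1 ?addr0; last first.
    by move=> x hx; rewrite big1 // => z _; rewrite eq_sym (negbTE hx) mul0r.
  rewrite eqxx; under eq_bigr do rewrite mul1r.
  by rewrite -mulr_suml -mYZ divff ?gt_eqF.
- move=> [x z]; rewrite ffunE /=.
  rewrite [RHS]sum_pair [RHS](bigD1 x) //= [X in _ + X]big1 ?addr0; last first.
    by move=> x' hx; rewrite big1 // => y _; rewrite (negbTE hx) mul0r mulr0.
  rewrite [QZ z]ffunE mulr_sumr; apply: eq_bigr => y _; rewrite [prodd _ _ _]ffunE /= eqxx mul1r; ring.
- move=> [x z]; rewrite markov_sum [RHS]sum_pair [RHS](bigD1 x) //= [X in _ + X]big1 ?addr0; last first.
    by move=> x' hx; rewrite big1 // => y _; rewrite (negbTE hx) mul0r mulr0.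
  by apply: eq_bigr => y _; rewrite eqxx mul1r.
Qed.

Lemma part3b : (umlaut pXZ <= umlaut pYZ)%E.
Proof.
apply: le_ereal_inf_tmp => e [Q hQ <-].
apply: ge_ereal_inf; exists (KL (prodd (margL pXZ) Q) pXZ); first by exists Q.
case: hQ => Q0 Q1.
apply: (DPI (K := fun s t => (s.2 == t.2)%:R * (pXY (t.1, s.1) / m s.1))).
- by move=> s; rewrite ffunE mulr_ge0 // margL_YZ mm0.
- exact: pYZ0.
- by move=> s t; rewrite mulr_ge0 ?ler0n ?divr_ge0 ?pXY0 ?mm0.
- move=> [y z'] Ps _ /=.
  have my : 0 < m y.
    move: Ps; rewrite ffunE /= margL_YZ => Ps.
    by case: (prod_gt0 (mm0 y) (Q0 z') Ps).
  rewrite sum_pair exchange_big (bigD1 z') //= [X in _ + X]big1 ?addr0; last first.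
    by move=> z hz; rewrite big1 // => x _; rewrite eq_sym (negbTE hz) mul0r.
  rewrite eqxx; under eq_bigr do rewrite mul1r.
  by rewrite -mulr_suml -mXY divff ?gt_eqF.
- move=> [x z]; rewrite ffunE /= margL_XZ mulr_suml [RHS]sum_pair.
  apply: eq_bigr => y _.
  rewrite [RHS](bigD1 z) //= [X in _ + X]big1 ?addr0; last first.
    by move=> z' hz; rewrite (negbTE hz) mul0r mulr0.
  rewrite [prodd _ _ _]ffunE /= eqxx mul1r margL_YZ.
  have [my|my] := eqVneq (m y) 0; first by rewrite pXYm0 // my !mul0r.
  by field.
- move=> [x z]; rewrite markov_sum [RHS]sum_pair; apply: eq_bigr => y _.
  rewrite [RHS](bigD1 z) //= [X in _ + X]big1 ?addr0; last first.
    by move=> z' hz; rewrite (negbTE hz) mul0r mulr0.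
  by rewrite eqxx mul1r /=; ring.
Qed.

End Part3.
End S.

Unset Implicit Arguments.

Theorem mainTheorem10 (R : realType) :
  (forall (X Y : finType) (p : {ffun X * Y -> R}), is_dist p ->
     ((0 <= umlaut p)%E /\ (umlaut p = 0%E <-> p = prodd (margL p) (margR p)))
     /\
     ((umlaut p < +oo)%E <->
        exists y : Y, forall x : X,
          0 < p (x, y) / margL p x \/ margL p x = 0))
  /\
  (forall (X Y Z : finType) (p : {ffun X * Y * Z -> R}), is_dist p -> markov3 p ->
     (umlaut (margXZ p) <= umlaut (margXY p))%E /\
     (umlaut (margXZ p) <= umlaut (margYZ p))%E).
Proof.
split.
  by move=> X Y p hp; apply: part12.
by move=> X Y Z p hp hm; split; [apply: part3a | apply: part3b].
Qed.
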